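(* Suppose $\gamma\ge\sqrt{8M}$ and $U:\mathbb R^d\to\mathbb R$ is twice continuously differentiable with $M$-Lipschitz gradient and $m$-strongly convex, with minimizer $x^*$; let $z^*=(x^*,0_d)$, $\lambda=\min(\frac14,\frac m{\gamma^2})$ and \[\mathcal V(x,v)=U(x)-U(x^* )+\frac14\gamma^2\big(\|x-x^*+\gamma^{-1}v\|^2+\|\gamma^{-1}v\|^2-\lambda\|x-x^*\|^2\big).\] Then for every $z=(x,v)\in\mathbb R^{2d}$, $\mathcal V(x,v)\ge0$ and \[\mathcal V^{1/2}(x,v)\ge\frac18(\gamma\|x-x^*\|+\|v\|)\ge\frac{\sqrt M}8\|z-z^*\|_{a,b}.\] Moreover, $\mathcal V^{1/2}$ is $8\gamma$-Lipschitz with respect to $\|\cdot\|_{a,b}$.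
   Context: $a=1/M$, $b=1/\gamma$, and $\|z\|_{a,b}^2=\|x\|^2+2b\langle x,v\rangle+a\|v\|^2$ for $z=(x,v)\in\mathbb R^{2d}$. *)

(* Defs.v *)
From HB Require Import structures.
From mathcomp Require Import all_boot all_order all_algebra.
From mathcomp Require Import all_classical all_reals all_analysis.
Set Implicit Arguments. Unset Strict Implicit. Unset Printing Implicit Defensive.
Import Order.TTheory GRing.Theory Num.Theory.
Import numFieldNormedType.Exports.
Local Open Scope ring_scope.

Section Defs.
Variables (R : realType) (d : nat).

Definition dotp (x y : 'rV[R]_d) : R := \sum_(i < d) x 0 i * y 0 i.
Definition enorm (x : 'rV[R]_d) : R := Num.sqrt (dotp x x).

Definition grad (U : 'rV[R]_d -> R) (x : 'rV[R]_d) : 'rV[R]_d :=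
  \row_i ('d U x (delta_mx 0 i : 'rV[R]_d)).

Definition C2 (U : 'rV[R]_d -> R) : Prop :=
  (forall x, differentiable U x) /\
  (forall x, differentiable (grad U) x) /\
  (forall h : 'rV[R]_d, continuous (fun x => 'd (grad U) x h)).

Definition grad_lipschitz (M : R) (U : 'rV[R]_d -> R) : Prop :=
  forall x y, enorm (grad U x - grad U y) <= M * enorm (x - y).

Definition strongly_convex (m : R) (U : 'rV[R]_d -> R) : Prop :=
  forall x y (t : R), 0 <= t <= 1 ->
    U (t *: x + (1 - t) *: y) <=
      t * U x + (1 - t) * U y - m / 2 * t * (1 - t) * enorm (x - y) ^+ 2.

Definition is_minimizer (U : 'rV[R]_d -> R) (xs : 'rV[R]_d) : Prop :=
  forall x, U xs <= U x.

(* ||(x,v)||_{a,b} with a = 1/M, b = 1/gamma *)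
Definition norm_ab (M gamma : R) (x v : 'rV[R]_d) : R :=
  Num.sqrt (enorm x ^+ 2 + 2 * gamma^-1 * dotp x v + M^-1 * enorm v ^+ 2).

Definition lam (m gamma : R) : R := Num.min (1/4) (m / gamma ^+ 2).

Definition Vfun (U : 'rV[R]_d -> R) (m gamma : R) (xs : 'rV[R]_d)
    (x v : 'rV[R]_d) : R :=
  U x - U xs + 1/4 * gamma ^+ 2 *
    (enorm (x - xs + gamma^-1 *: v) ^+ 2 + enorm (gamma^-1 *: v) ^+ 2
     - lam m gamma * enorm (x - xs) ^+ 2).

End Defs.

(* Main.v *)
Require Import Defs.
From HB Require Import structures.
From mathcomp Require Import all_boot all_order all_algebra.
From mathcomp Require Import all_classical all_reals all_analysis.
From mathcomp Require Import ring lra.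
Import Order.TTheory GRing.Theory Num.Theory.
Import numFieldNormedType.Exports.
Local Open Scope ring_scope.
Set Implicit Arguments. Unset Strict Implicit.

Section Helpers.
Variables (R : realType) (d : nat).
Implicit Types x y z : 'rV[R]_d.

Lemma dotpC x y : dotp x y = dotp y x.
Proof. by rewrite /dotp; apply: eq_bigr => i _; rewrite mulrC. Qed.
Lemma dotpDl x y z : dotp (x + y) z = dotp x z + dotp y z.
Proof. by rewrite /dotp -big_split; apply: eq_bigr => i _; rewrite !mxE mulrDl. Qed.
Lemma dotpZl (c : R) x y : dotp (c *: x) y = c * dotp x y.
Proof. by rewrite /dotp mulr_sumr; apply: eq_bigr => i _; rewrite !mxE mulrA. Qed.
Lemma dotpNl x y : dotp (- x) y = - dotp x y.
Proof. by rewrite -scaleN1r dotpZl mulN1r. Qed.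
Lemma dotpDr x y z : dotp x (y + z) = dotp x y + dotp x z.
Proof. by rewrite dotpC dotpDl !(dotpC x). Qed.
Lemma dotpZr (c : R) x y : dotp x (c *: y) = c * dotp x y.
Proof. by rewrite dotpC dotpZl dotpC. Qed.
Lemma dotpNr x y : dotp x (- y) = - dotp x y.
Proof. by rewrite dotpC dotpNl dotpC. Qed.
Lemma dotpBl x y z : dotp (x - y) z = dotp x z - dotp y z.
Proof. by rewrite dotpDl dotpNl. Qed.
Lemma dotpBr x y z : dotp x (y - z) = dotp x y - dotp x z.
Proof. by rewrite dotpDr dotpNr. Qed.
Lemma dotp_ge0 x : 0 <= dotp x x.
Proof. by apply: sumr_ge0 => i _; rewrite -expr2 sqr_ge0. Qed.
Lemma enorm_ge0 x : 0 <= enorm x.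
Proof. exact: sqrtr_ge0. Qed.
Lemma enorm_sq x : enorm x ^+ 2 = dotp x x.
Proof. by rewrite /enorm sqr_sqrtr // dotp_ge0. Qed.

Lemma sq_le_sqrt (a b : R) : 0 <= a -> a ^+ 2 <= b -> a <= Num.sqrt b.
Proof.
move=> a0 ab; have b0 : 0 <= b by apply: le_trans ab; rewrite sqr_ge0.
by rewrite -(ger0_norm a0) -sqrtr_sqr ler_sqrt.
Qed.
Lemma sqrt_le_sq (b c : R) : 0 <= c -> b <= c ^+ 2 -> Num.sqrt b <= c.
Proof.
move=> c0 bc; case: (leP 0 b) => b0.
  by rewrite -(ger0_norm c0) -sqrtr_sqr ler_sqrt // sqr_ge0.
by rewrite ltr0_sqrtr.
Qed.
Lemma sq_le (a b : R) : 0 <= b -> a ^+ 2 <= b ^+ 2 -> a <= b.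
Proof. move=> b0 h; nra. Qed.

Lemma enorm_eq0 x : enorm x = 0 -> dotp x x = 0.
Proof. by move=> h; rewrite -enorm_sq h expr0n. Qed.

Lemma dotp0 x y : dotp x x = 0 -> dotp x y = 0.
Proof.
move=> h; have h0 := psumr_eq0P (fun i (_ : true) => (sqr_ge0 (x 0 i) : 0 <= x 0 i ^+ 2)) h.
rewrite /dotp big1 // => i _.
have /eqP := h0 i isT; rewrite mulf_eq0 orbb => /eqP ->; exact: mul0r.
Qed.

Lemma CS x y : dotp x y <= enorm x * enorm y.
Proof.
set a := enorm x; set b := enorm y.
have a0 : 0 <= a := enorm_ge0 x. have b0 : 0 <= b := enorm_ge0 y.
have ha : dotp x x = a ^+ 2 by rewrite enorm_sq.
have hb : dotp y y = b ^+ 2 by rewrite enorm_sq.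
have H : forall s t : R, 0 <= s ^+ 2 * a ^+ 2 - 2 * s * t * dotp x y + t ^+ 2 * b ^+ 2.
  move=> s t; have := dotp_ge0 (s *: x - t *: y).
  rewrite !dotpBl !dotpBr !dotpZl !dotpZr (dotpC y x) ha hb.
  by move=> h; apply: le_trans h _; rewrite le_eqVlt; apply/orP; left; apply/eqP; ring.
have H1 := H b a.
case: (ltP 0 (a * b)) => ab.
  have : a * b * dotp x y <= a * b * (a * b) by nra.
  by rewrite ler_pM2l.
have ab0 : a * b = 0 by apply/eqP; rewrite eq_le ab mulr_ge0.
move/eqP: ab0; rewrite mulf_eq0 => /orP [] /eqP e0.
  by rewrite dotp0 ?mulr_ge0 // ha e0 expr0n.
by rewrite dotpC dotp0 ?mulr_ge0 // hb e0 expr0n.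
Qed.

Lemma CSabs x y : `|dotp x y| <= enorm x * enorm y.
Proof.
rewrite ler_norml CS andbT.
have := CS x (- y); rewrite dotpNr.
have -> : enorm (- y) = enorm y by rewrite /enorm dotpNl dotpNr opprK.
by rewrite lerNl.
Qed.

Lemma enormZ (c : R) x : enorm (c *: x) = `|c| * enorm x.
Proof.
apply/eqP; rewrite -(eqrXn2 (n:=2)) //; last by rewrite mulr_ge0 ?enorm_ge0.
by rewrite exprMn !enorm_sq dotpZl dotpZr real_normK ?num_real // mulrA expr2.
by rewrite enorm_ge0.
Qed.
Lemma enormN x : enorm (- x) = enorm x.
Proof. by rewrite /enorm dotpNl dotpNr opprK. Qed.

Lemma diff_dotp (U : 'rV[R]_d -> R) x h : 'd U x h = dotp (grad U x) h.
Proof.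
rewrite {1}(row_sum_delta h) linear_sum /dotp; apply: eq_bigr => i _.
by rewrite linearZ /= /grad mxE mulrC.
Qed.

End Helpers.

Section H2.
Variables (R : realType) (d : nat).

Lemma line_is_derive (U : 'rV[R]_d -> R) x h (t : R) : differentiable U (t *: h + x) ->
  is_derive t 1 (fun s : R => U (s *: h + x)) ('d U (t *: h + x) h).
Proof.
move=> dU.
have E : (fun s : R => s^-1 *: (((fun s => U (s *: h + x)) \o shift t) (s *: 1) - U (t *: h + x)))
       = (fun s : R => s^-1 *: ((U \o shift (t *: h + x)) (s *: h) - U (t *: h + x))).
  by apply/funext => s /=; rewrite [s *: 1]mulr1 scalerDl addrA.
have D : derivable U (t *: h + x) h by exact: diff_derivable.
split.
  by rewrite /derivable E.
by rewrite /derive E -deriveE.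
Qed.

Lemma descent (U : 'rV[R]_d -> R) (M : R) x h : 0 <= M ->
  (forall x, differentiable U x) -> grad_lipschitz M U ->
  U (h + x) <= U x + dotp (grad U x) h + M * enorm h ^+ 2.
Proof.
move=> M0 dU gL.
have := @MVT R (fun s : R => U (s *: h + x)) (fun s => 'd U (s *: h + x) h) 0 1 ltr01.
case.
- by move=> s _; apply: line_is_derive.
- apply: derivable_within_continuous => s _.
  by have [] := @line_is_derive U x h s (dU _).
move=> c; rewrite in_itv /= => /andP [c0 c1]; rewrite scale1r scale0r add0r subr0 mulr1 => E.
have -> : U (h + x) = U x + 'd U (c *: h + x) h by rewrite -E addrCA subrr addr0.
rewrite (@diff_dotp R d U (c *: h + x) h).
rewrite -addrA lerD2l.
have G := gL (c *: h + x) x; rewrite addrK (@enormZ R d) (ger0_norm (ltW c0)) in G.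
have C := @CS R d (grad U (c *: h + x) - grad U x) h.
rewrite (@dotpBl R d) lerBlDl in C.
apply: (le_trans C); rewrite lerD2l.
have h0 := @enorm_ge0 R d h.
apply: le_trans (ler_wpM2r h0 G) _.
rewrite -mulrA ler_wpM2l // expr2 ler_wpM2r // ler_piMl // ltW //.
Qed.
End H2.
Section H3.
Variable R : realType.

Lemma core (g M l F S n Pn Qn Wn Kn Yn Hn Gn pq wk yh gh : R) :
  0 < g -> 0 < M -> 8 * M <= g ^+ 2 -> 0 <= l -> l <= 1/4 -> 0 <= F -> 0 <= S -> 0 <= n ->
  0 <= Pn -> 0 <= Qn -> 0 <= Wn -> 0 <= Kn -> 0 <= Yn -> 0 <= Hn -> 0 <= Gn ->
  S ^+ 2 = F + 1/4 * g ^+ 2 * (Pn ^+ 2 + Wn ^+ 2 - l * Yn ^+ 2) ->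
  pq <= Pn * Qn -> wk <= Wn * Kn -> - yh <= Yn * Hn -> gh <= Gn * Hn ->
  Gn ^+ 2 <= 4 * M * F ->
  Yn ^+ 2 <= 2 * Pn ^+ 2 + 2 * Wn ^+ 2 -> Hn ^+ 2 <= 2 * Qn ^+ 2 + 2 * Kn ^+ 2 ->
  Qn ^+ 2 + 7 * Kn ^+ 2 <= n ^+ 2 ->
  F + gh + M * Hn ^+ 2 + 1/4 * g ^+ 2 *
    ((Pn ^+ 2 + 2 * pq + Qn ^+ 2) + (Wn ^+ 2 + 2 * wk + Kn ^+ 2)
      - l * (Yn ^+ 2 + 2 * yh + Hn ^+ 2)) <= (S + 8 * g * n) ^+ 2.
Proof.
move=> g0 M0 gM l0 l1 F0 S0 n0 P0 Q0 W0 K0 Y0 H0 G0 ES pqb wkb yhb ghb Gb Yb Hb nb.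
have sS := sqr_ge0 S; have sP := sqr_ge0 Pn; have sW := sqr_ge0 Wn.
have sY := sqr_ge0 Yn; have sH := sqr_ge0 Hn; have sQ := sqr_ge0 Qn.
have sK := sqr_ge0 Kn; have sn := sqr_ge0 n; have sg := sqr_ge0 g.
have lY : l * Yn ^+ 2 <= 1/4 * Yn ^+ 2 by rewrite ler_wpM2r // sqr_ge0.
have a : g ^+ 2 * (Pn ^+ 2 + Wn ^+ 2) <= 8 * S ^+ 2.
  have : (Pn ^+ 2 + Wn ^+ 2) / 2 <= Pn ^+ 2 + Wn ^+ 2 - l * Yn ^+ 2 by lra.
  move=> h; have h2 := ler_wpM2l (sqr_ge0 g) h. lra.
have bP : g * Pn <= 3 * S.
  apply: sq_le; first lra. rewrite !exprMn. 
  have : g ^+ 2 * Pn ^+ 2 <= g ^+ 2 * (Pn ^+ 2 + Wn ^+ 2) by rewrite ler_wpM2l ?sqr_ge0 // lerDl sqr_ge0.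
  lra.
have bW : g * Wn <= 3 * S.
  apply: sq_le; first lra. rewrite !exprMn. 
  have : g ^+ 2 * Wn ^+ 2 <= g ^+ 2 * (Pn ^+ 2 + Wn ^+ 2) by rewrite ler_wpM2l ?sqr_ge0 // lerDr sqr_ge0.
  lra.
have bY : g * Yn <= 4 * S.
  apply: sq_le; first lra. rewrite !exprMn.
  have : g ^+ 2 * Yn ^+ 2 <= g ^+ 2 * (2 * Pn ^+ 2 + 2 * Wn ^+ 2) by rewrite ler_wpM2l ?sqr_ge0.
  lra.
have FS : F <= S ^+ 2.
  rewrite ES lerDl; apply: mulr_ge0; first by apply: mulr_ge0; [lra| exact: sqr_ge0].
  have := sqr_ge0 Pn; have := sqr_ge0 Wn; lra.
have bG : Gn <= g * S.
  apply: sq_le; first exact: mulr_ge0 (ltW g0) S0.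
  rewrite exprMn; apply: (le_trans Gb).
  have : 4 * M * F <= 4 * M * S ^+ 2 by rewrite ler_wpM2l // mulr_ge0 // ltW.
  have : 8 * M * S ^+ 2 <= g ^+ 2 * S ^+ 2 by rewrite ler_wpM2r // sqr_ge0.
  have : 0 <= M * S ^+ 2 by rewrite mulr_ge0 // ltW.
  lra.
have bQ : Qn <= n by apply: sq_le => //; have := sqr_ge0 Kn; lra.
have bK : 2 * Kn <= n by apply: sq_le => //; rewrite exprMn; have := sqr_ge0 Qn; lra.
have bH : Hn <= 2 * n by apply: sq_le; [lra | rewrite exprMn; have := sqr_ge0 Qn; lra].
have mg : forall a1 b1 : R, a1 <= b1 -> g * a1 <= g * b1 by move=> a1 b1 h; apply: ler_wpM2l => //; exact: ltW.
have gP : 0 <= g * Pn by apply: mulr_ge0 => //; exact: ltW.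
have gW : 0 <= g * Wn by apply: mulr_ge0 => //; exact: ltW.
have gY : 0 <= g * Yn by apply: mulr_ge0 => //; exact: ltW.
have t1 : gh <= 2 * g * S * n.
  have := ler_pM G0 H0 bG bH; lra.
have t2 : g ^+ 2 * pq <= 3 * g * S * n.
  have := mg _ _ (mg _ _ pqb); have := mg _ _ (ler_pM gP Q0 bP bQ); lra.
have t3 : g ^+ 2 * (2 * wk) <= 3 * g * S * n.
  have K2 : 0 <= 2 * Kn by lra.
  have := mg _ _ (mg _ _ wkb); have := mg _ _ (ler_pM gW K2 bW bK); lra.
have t4 : g ^+ 2 * (l * (- yh)) <= 2 * g * S * n.
  have h1a := ler_wpM2l l0 yhb.
  have h1b := ler_wpM2r (mulr_ge0 Y0 H0) l1.
  have h1 : l * (- yh) <= 1/4 * (Yn * Hn) by lra.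
  have := mg _ _ (mg _ _ h1); have := mg _ _ (ler_pM gY H0 bY bH); lra.
have t5 : M * Hn ^+ 2 <= g ^+ 2 * n ^+ 2.
  have : Hn ^+ 2 <= 4 * n ^+ 2 by have := ler_pM H0 H0 bH bH; rewrite -!expr2; lra.
  move=> h.
  have : M * Hn ^+ 2 <= M * (4 * n ^+ 2) by apply: ler_wpM2l => //; exact: ltW.
  have : 8 * M * n ^+ 2 <= g ^+ 2 * n ^+ 2 by apply: ler_wpM2r.
  have : 0 <= M * n ^+ 2 by apply: mulr_ge0 => //; exact: ltW.
  lra.
have t6 : g ^+ 2 * (Qn ^+ 2 + Kn ^+ 2) <= g ^+ 2 * (2 * n ^+ 2).
  apply: ler_wpM2l => //; lra.
have t7 : 0 <= g ^+ 2 * (l * Hn ^+ 2) by apply: mulr_ge0 => //; apply: mulr_ge0.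
have gSn : 0 <= g * S * n by apply: mulr_ge0 => //; apply: mulr_ge0 => //; exact: ltW.
have gn : 0 <= g ^+ 2 * n ^+ 2 by exact: mulr_ge0.
rewrite sqrrD ES.
lra.
Qed.

End H3.

Section H4.
Variables (R : realType) (d : nat).
Implicit Types x y : 'rV[R]_d.

Lemma normD2 x y : enorm (x + y) ^+ 2 = enorm x ^+ 2 + 2 * dotp x y + enorm y ^+ 2.
Proof. by rewrite !enorm_sq dotpDl !dotpDr (dotpC y x); ring. Qed.

Lemma sq_sub_le x y : enorm (x - y) ^+ 2 <= 2 * enorm x ^+ 2 + 2 * enorm y ^+ 2.
Proof.
rewrite !enorm_sq dotpBl !dotpBr (dotpC y x).
have := CSabs x y; rewrite ler_norml => /andP [h1 h2].
have := enorm_sq x; have := enorm_sq y.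
have := sqr_ge0 (enorm x - enorm y).
nra.
Qed.

Lemma gradbound (U : 'rV[R]_d -> R) (M : R) xs x : 0 < M ->
  (forall x, differentiable U x) -> grad_lipschitz M U -> is_minimizer U xs ->
  enorm (grad U x) ^+ 2 <= 4 * M * (U x - U xs).
Proof.
move=> M0 dU gL mU.
set g := grad U x; set c := (2 * M)^-1.
have D := @descent R d U M x (- c *: g) (ltW M0) dU gL.
have := mU (- c *: g + x).
rewrite enorm_sq in D *.
rewrite dotpZr dotpZl dotpZr in D.
have c2 : 2 * M * c = 1 by rewrite /c mulfV // mulf_neq0 // gt_eqF.
have c0 : 0 <= c by rewrite /c invr_ge0 mulr_ge0 // ltW.
move=> m1.
have H : c * dotp g g <= 2 * (U x - U xs).
  have e : M * (- c * (- c * dotp g g)) = (2 * M * c) * (c * dotp g g) / 2 by field.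
  rewrite e c2 mul1r in D. lra.
have := ler_wpM2l (mulr_ge0 (ler0n R 2) (ltW M0)) H.
rewrite mulrA c2 mul1r => H2.
rewrite enorm_sq; lra.
Qed.

Lemma lam_ge0 (m g : R) : 0 < m -> 0 <= lam m g.
Proof.
move=> m0; rewrite /lam le_min; apply/andP; split; first lra.
by apply: divr_ge0; [exact: ltW | exact: sqr_ge0].
Qed.
Lemma lam_le (m g : R) : lam m g <= 1/4.
Proof. by rewrite /lam ge_min lexx. Qed.

End H4.

Section H5.
Variables (R : realType) (d : nat).
Implicit Types x y w : 'rV[R]_d.

Lemma Q_lower y w (l : R) : 0 <= l -> l <= 1/4 ->
  (enorm (y + w) ^+ 2 + enorm w ^+ 2) / 2 <= enorm (y + w) ^+ 2 + enorm w ^+ 2 - l * enorm y ^+ 2.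
Proof.
move=> l0 l1.
have := sq_sub_le (y + w) w; rewrite addrK => h.
have := ler_wpM2r (sqr_ge0 (enorm y)) l1.
lra.
Qed.

Lemma part1 (U : 'rV[R]_d -> R) (m g : R) xs x v : 0 < m -> is_minimizer U xs ->
  0 <= Vfun U m g xs x v.
Proof.
move=> m0 mU; rewrite /Vfun.
have F0 : 0 <= U x - U xs by rewrite subr_ge0.
have := Q_lower (x - xs) (g^-1 *: v) (lam_ge0 g m0) (lam_le m g).
have := sqr_ge0 (enorm (x - xs + g^-1 *: v)); have := sqr_ge0 (enorm (g^-1 *: v)).
move=> h1 h2 h3.
apply: addr_ge0 => //; apply: mulr_ge0; first by apply: mulr_ge0; [lra | exact: sqr_ge0].
lra.
Qed.

End H5.

Section H6.
Variables (R : realType) (d : nat).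
Implicit Types x y w : 'rV[R]_d.

Lemma v_eq (g : R) (v : 'rV[R]_d) : 0 < g -> v = g *: (g^-1 *: v).
Proof. by move=> g0; rewrite scalerA mulfV ?gt_eqF // scale1r. Qed.

Lemma part2 (U : 'rV[R]_d -> R) (m g : R) xs x v : 0 < m -> 0 < g -> is_minimizer U xs ->
  1/8 * (g * enorm (x - xs) + enorm v) <= Num.sqrt (Vfun U m g xs x v).
Proof.
move=> m0 g0 mU.
have ev : enorm v = g * enorm (g^-1 *: v).
  by rewrite {1}(v_eq v g0) enormZ ger0_norm // ltW.
rewrite ev.
apply: sq_le_sqrt.
  have a1 := enorm_ge0 (x - xs); have b1 := enorm_ge0 (g^-1 *: v).
  have := mulr_ge0 (ltW g0) a1; have := mulr_ge0 (ltW g0) b1; lra.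
rewrite /Vfun normD2.
set y := x - xs; set w := g^-1 *: v.
have F0 : 0 <= U x - U xs by rewrite subr_ge0.
have := CSabs y w; rewrite ler_norml => /andP [c1 c2].
have l0 := lam_ge0 g m0; have l1 := lam_le m g.
have ny := enorm_ge0 y; have nw := enorm_ge0 w.
have lY := ler_wpM2r (sqr_ge0 (enorm y)) l1.
have Q : (enorm y + enorm w) ^+ 2 <= 16 * (enorm y ^+ 2 + 2 * dotp y w + enorm w ^+ 2 + enorm w ^+ 2 - lam m g * enorm y ^+ 2).
  have := sqr_ge0 (11 * enorm y - 17 * enorm w).
  have := sqr_ge0 (enorm w).
  nra.
have := ler_wpM2l (sqr_ge0 g) Q.
have := sqr_ge0 g.
move=> g2 H.
have e : (1 / 8 * (g * enorm y + g * enorm w)) ^+ 2 = g ^+ 2 * (enorm y + enorm w) ^+ 2 / 64 by field.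
rewrite e.
lra.
Qed.

Lemma part3 (M g : R) x v : 0 < M -> 0 < g -> 8 * M <= g ^+ 2 ->
  Num.sqrt M / 8 * norm_ab M g x v <= 1/8 * (g * enorm x + enorm v).
Proof.
move=> M0 g0 gM.
rewrite /norm_ab.
rewrite -[Num.sqrt M / 8 * _]/(Num.sqrt M / 8 * Num.sqrt _).
have -> : forall A0 : R, Num.sqrt M / 8 * Num.sqrt A0 = 1/8 * Num.sqrt (M * A0).
  by move=> A0; rewrite sqrtrM ?ltW //; field.
apply: ler_wpM2l; first lra.
apply: sqrt_le_sq.
  by apply: addr_ge0; [apply: mulr_ge0; [exact: ltW | exact: enorm_ge0] | exact: enorm_ge0].
set t := M / g.
have t0 : 0 <= t by apply: divr_ge0; exact: ltW.
have t8 : 8 * t <= g.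
  rewrite /t mulrA ler_pdivrMr //; lra.
have e : M * (enorm x ^+ 2 + 2 * g^-1 * dotp x v + M^-1 * enorm v ^+ 2) =
         M * enorm x ^+ 2 + 2 * t * dotp x v + enorm v ^+ 2.
  rewrite /t; field; rewrite ?gt_eqF //.
rewrite e.
have := CSabs x v; rewrite ler_norml => /andP [c1 c2].
have nx := enorm_ge0 x; have nv := enorm_ge0 v.
have p1 := ler_wpM2l t0 c2.
have p2 := ler_wpM2r (mulr_ge0 nx nv) t8.
have p3 := ler_wpM2r (sqr_ge0 (enorm x)) gM.
have p4 : 0 <= g * (enorm x * enorm v) by apply: mulr_ge0; [exact: ltW | exact: mulr_ge0].
have e2 : (g * enorm x + enorm v) ^+ 2 = g ^+ 2 * enorm x ^+ 2 + 2 * (g * (enorm x * enorm v)) + enorm v ^+ 2 by ring.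
rewrite e2.
have := sqr_ge0 (g * enorm x).
lra.
Qed.

End H6.

Section H7.
Variables (R : realType) (d : nat).
Implicit Types x y w : 'rV[R]_d.

Lemma lip_step (U : 'rV[R]_d -> R) (M m g : R) xs x v x' v' :
  0 < m -> 0 < M -> 8 * M <= g ^+ 2 -> 0 < g ->
  (forall x, differentiable U x) -> grad_lipschitz M U -> is_minimizer U xs ->
  Vfun U m g xs x' v' <=
    (Num.sqrt (Vfun U m g xs x v) + 8 * g * norm_ab M g (x' - x) (v' - v)) ^+ 2.
Proof.
move=> m0 M0 gM g0 dU gL mU.
set y := x - xs; set w := g^-1 *: v; set h := x' - x; set k := g^-1 *: (v' - v).
have e1 : x' - xs + g^-1 *: v' = (y + w) + (h + k).
  by apply/rowP => i; rewrite /y /w /h /k !mxE; ring.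
have e2 : g^-1 *: v' = w + k.
  by apply/rowP => i; rewrite /w /k !mxE; ring.
have e3 : x' - xs = y + h.
  by apply/rowP => i; rewrite /y /h !mxE; ring.
have Dsc : U x' <= U x + dotp (grad U x) h + M * enorm h ^+ 2.
  by have := descent x h (ltW M0) dU gL; rewrite /h subrK.
have V0 := part1 g x v m0 mU.
set S := Num.sqrt (Vfun U m g xs x v).
have S0 : 0 <= S := sqrtr_ge0 _.
have SE : S ^+ 2 = (U x - U xs) + 1/4 * g ^+ 2 *
   (enorm (y + w) ^+ 2 + enorm w ^+ 2 - lam m g * enorm y ^+ 2).
  by rewrite /S sqr_sqrtr.
have ev : v' - v = g *: k by rewrite /k -v_eq.
set arg := enorm h ^+ 2 + 2 * g^-1 * dotp h (v' - v) + M^-1 * enorm (v' - v) ^+ 2.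
have argE : arg = enorm h ^+ 2 + 2 * dotp h k + (g ^+ 2 / M) * enorm k ^+ 2.
  rewrite /arg ev dotpZr enormZ ger0_norm ?ltW // exprMn; field; by rewrite !gt_eqF.
have g8 : 8 <= g ^+ 2 / M by rewrite ler_pdivlMr.
have argb : enorm (h + k) ^+ 2 + 7 * enorm k ^+ 2 <= arg.
  rewrite argE normD2.
  have := ler_wpM2r (sqr_ge0 (enorm k)) g8. lra.
have arg0 : 0 <= arg.
  apply: le_trans argb; apply: addr_ge0; [exact: sqr_ge0 | apply: mulr_ge0; [lra | exact: sqr_ge0]].
have nE : norm_ab M g h (v' - v) ^+ 2 = arg by rewrite /norm_ab sqr_sqrtr.
have n0 : 0 <= norm_ab M g h (v' - v) by exact: sqrtr_ge0.
rewrite -/arg in nE.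
rewrite /Vfun e1 e2 e3 (normD2 (y + w) (h + k)) (normD2 w k) (normD2 y h).
have Yb : enorm y ^+ 2 <= 2 * enorm (y + w) ^+ 2 + 2 * enorm w ^+ 2.
  by have := sq_sub_le (y + w) w; rewrite addrK.
have Hb : enorm h ^+ 2 <= 2 * enorm (h + k) ^+ 2 + 2 * enorm k ^+ 2.
  by have := sq_sub_le (h + k) k; rewrite addrK.
have yhb : - dotp y h <= enorm y * enorm h.
  by have := CSabs y h; rewrite ler_norml => /andP [a _]; rewrite lerNl.
have F0 : 0 <= U x - U xs by rewrite subr_ge0.
have C := core g0 M0 gM (lam_ge0 g m0) (lam_le m g) F0 S0 n0
  (enorm_ge0 (y + w)) (enorm_ge0 (h + k)) (enorm_ge0 w) (enorm_ge0 k) (enorm_ge0 y) (enorm_ge0 h)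
  (enorm_ge0 (grad U x)).
have C2 := C _ _ _ _ SE (CS (y + w) (h + k)) (CS w k) yhb (CS (grad U x) h)
  (gradbound x M0 dU gL mU) Yb Hb.
rewrite -nE in argb.
have C3 := C2 argb.
apply: le_trans C3.
lra.
Qed.

End H7.


Unset Implicit Arguments. Set Strict Implicit.

Theorem lemma9 (R : realType) (d : nat) (M m gamma : R)
    (U : 'rV[R]_d -> R) (xs : 'rV[R]_d) :
  0 < m -> 0 < M -> Num.sqrt (8 * M) <= gamma ->
  C2 U -> grad_lipschitz M U -> strongly_convex m U -> is_minimizer U xs ->
  (forall x v : 'rV[R]_d,
     0 <= Vfun U m gamma xs x v /\
     1/8 * (gamma * enorm (x - xs) + enorm v) <= Num.sqrt (Vfun U m gamma xs x v) /\
     Num.sqrt M / 8 * norm_ab M gamma (x - xs) v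
       <= 1/8 * (gamma * enorm (x - xs) + enorm v)) /\
  (forall x v x' v' : 'rV[R]_d,
     `| Num.sqrt (Vfun U m gamma xs x v) - Num.sqrt (Vfun U m gamma xs x' v') |
       <= 8 * gamma * norm_ab M gamma (x - x') (v - v')).
Proof.
move=> m0 M0 gs C2U gL sc mU.
have [dU _] := C2U.
have s0 : 0 < Num.sqrt (8 * M) by rewrite sqrtr_gt0 mulr_gt0.
have g0 : 0 < gamma := lt_le_trans s0 gs.
have gM : 8 * M <= gamma ^+ 2.
  have e : 8 * M = Num.sqrt (8 * M) * Num.sqrt (8 * M).
    by rewrite -expr2 sqr_sqrtr // mulr_ge0 // ltW.
  by rewrite e expr2; apply: ler_pM => //; exact: ltW.
split.
  move=> x v; split; first exact: part1.
  split; first exact: part2.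
  exact: part3.
move=> x v x' v'.
have A := lip_step x' v' x v m0 M0 gM g0 dU gL mU.
have B := lip_step x v x' v' m0 M0 gM g0 dU gL mU.
have ns : norm_ab M gamma (x' - x) (v' - v) = norm_ab M gamma (x - x') (v - v').
  by rewrite -(opprB x x') -(opprB v v') /norm_ab !enormN dotpNl dotpNr opprK.
rewrite ns in B.
set K := 8 * gamma * norm_ab M gamma (x - x') (v - v').
have K0 : 0 <= K by apply: mulr_ge0; [apply: mulr_ge0; [lra | exact: ltW] | exact: sqrtr_ge0].
have S0 := sqrtr_ge0 (Vfun U m gamma xs x v).
have S0' := sqrtr_ge0 (Vfun U m gamma xs x' v').
have A' := sqrt_le_sq (addr_ge0 S0' K0) A.
have B' := sqrt_le_sq (addr_ge0 S0 K0) B.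
rewrite ler_norml; apply/andP; split; lra.
Qed.
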